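(* Let $\omega\in\mathcal{F}^1(\mathbb{P}^n,e)$. If $\omega\in\mathcal{U}$ then $\sqrt{I(\omega)}=\sqrt{K(\omega)}$. Conversely, if $\sqrt{I(\omega)}=\sqrt{K(\omega)}$ then $\omega\in\mathcal{U}$.
   Context: Let $S=\mathbb{C}[x_0,\ldots,x_n]$ and $R=\sum_i x_i\partial/\partial x_i$. $\mathcal{F}^1(\mathbb{P}^n,e)$ ($e\ge2$) is the set of (classes up to scalar of) 1-forms $\omega=\sum_{i=0}^n A_i\,dx_i$, $A_i\in S$ homogeneous of degree $e-1$, not all zero, with $i_R\omega=0$, $\omega\wedge d\omega=0$ and zero locus $\mathrm{sing}(\omega)\subseteq\mathbb{P}^n$ of codimension $\ge2$. For a form $\eta$, $\mathscr{C}(\eta)$ is the ideal of $S$ generated by its polynomial coefficients. $J(\omega)=\mathscr{C}(\omega)=(A_0,\ldots,A_n)$. $I(\omega)=\{h\in S:\ h\,d\omega=\omega\wedge\eta\text{ for some polynomial 1-form }\eta\}$ (the ideal of graded projective unfoldings). $K(\omega)=(J(\omega):\mathscr{C}(d\omega))$, and $\mathcal{K}=\mathrm{Proj}(S/K(\omega))$. For a homogeneous prime $\mathfrak{p}\subset S$ other than $(x_0,\ldots,x_n)$ (a point of $\mathbb{P}^n$), subscript $\mathfrak{p}$ denotes localization; $\mathfrak{p}$ is a division point of $\omega$ if $1\in I(\omega)_\mathfrak{p}$. $\mathcal{U}$ is the set of $\omega\in\mathcal{F}^1(\mathbb{P}^n,e)$ such that every point $\mathfrak{p}\notin\mathcal{K}$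 is a division point of $\omega$. *)

(* Defs.v *)
From HB Require Import structures.
From mathcomp Require Import all_boot all_order all_algebra.
From mathcomp Require Import Rstruct.
From mathcomp Require Import complex.
From mathcomp Require Import mpoly.

Set Implicit Arguments.
Unset Strict Implicit.
Unset Printing Implicit Defensive.

Import GRing.Theory.
Local Open Scope ring_scope.

Definition CC : closedFieldType := Rcomplex Rdefinitions.R.

(* S = C[x_0, ..., x_n]  (n.+1 variables, indexed by 'I_n.+1). *)
Definition Spoly (n : nat) := {mpoly CC[n.+1]}.

Definition is_ideal (R : comNzRingType) (I : R -> Prop) : Prop :=
  [/\ I 0, (forall a b, I a -> I b -> I (a + b)) & (forall r a, I a -> I (r * a))].

Definition is_prime_ideal (R : comNzRingType) (P : R -> Prop) : Prop :=
  [/\ is_ideal P, ~ P 1 & (forall a b, P (a * b) -> P a \/ P b)].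

Definition gen_ideal (R : comNzRingType) (I : finType) (g : I -> R) : R -> Prop :=
  fun h => exists c : I -> R, h = \sum_i c i * g i.

Definition colon_ideal (R : comNzRingType) (I1 I2 : R -> Prop) : R -> Prop :=
  fun h => forall g, I2 g -> I1 (h * g).

Definition ideal_radical (R : comNzRingType) (I : R -> Prop) : R -> Prop :=
  fun h => exists m : nat, I (h ^+ m).

Definition ideal_sub (R : comNzRingType) (I1 I2 : R -> Prop) : Prop :=
  forall h, I1 h -> I2 h.

Definition height_ge2 (R : comNzRingType) (q : R -> Prop) : Prop :=
  exists q0 q1 : R -> Prop,
    [/\ is_prime_ideal q0, is_prime_ideal q1,
        ideal_sub q0 q1 /\ ~ ideal_sub q1 q0 &
        ideal_sub q1 q /\ ~ ideal_sub q q1].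

Definition is_homogeneous_ideal n (I : Spoly n -> Prop) : Prop :=
  forall f d, I f -> I (pihomog mdeg d f).

Definition irrelevant_ideal n : Spoly n -> Prop :=
  gen_ideal (fun i : 'I_n.+1 => ('X_i : Spoly n)).

Definition set_eq (R : Type) (I1 I2 : R -> Prop) : Prop := forall h, I1 h <-> I2 h.

(* Points of P^n = Proj S: homogeneous primes other than the irrelevant ideal. *)
Definition is_Pn_point n (p : Spoly n -> Prop) : Prop :=
  [/\ is_prime_ideal p, is_homogeneous_ideal p & ~ set_eq p (@irrelevant_ideal n)].

(* Localization: the extended ideal I S_p, viewed inside the fraction field
   of S (S_p is the subring {a/s : s \notin p}). *)
Definition loc_ideal n (I p : Spoly n -> Prop) : {fraction Spoly n} -> Prop :=
  fun x => exists a s : Spoly n,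
    [/\ I a, ~ p s & x = FracField.tofrac a / FracField.tofrac s].

(* A polynomial 1-form  sum_i A_i dx_i  is given by its
   coefficient function A : 'I_n.+1 -> S.  A 2-form sum_{i<j} B_ij dx_i^dx_j is
   represented by the full alternating matrix (i,j) |-> B_ij. *)

Definition form1 n := 'I_n.+1 -> Spoly n.

Definition dform n (A : form1 n) : 'I_n.+1 -> 'I_n.+1 -> Spoly n :=
  fun i j => (A j)^`M(i) - (A i)^`M(j).

Definition wedge11 n (A eta : form1 n) : 'I_n.+1 -> 'I_n.+1 -> Spoly n :=
  fun i j => A i * eta j - A j * eta i.

Definition wedge12 n (A : form1 n) (B : 'I_n.+1 -> 'I_n.+1 -> Spoly n)
  : 'I_n.+1 -> 'I_n.+1 -> 'I_n.+1 -> Spoly n :=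
  fun i j k => A i * B j k - A j * B i k + A k * B i j.

Definition contrR n (A : form1 n) : Spoly n := \sum_i 'X_i * A i.

Definition coef_ideal1 n (A : form1 n) : Spoly n -> Prop := gen_ideal A.
Definition coef_ideal2 n (B : 'I_n.+1 -> 'I_n.+1 -> Spoly n) : Spoly n -> Prop :=
  gen_ideal (fun ij : 'I_n.+1 * 'I_n.+1 => B ij.1 ij.2).

Definition J_ideal n (A : form1 n) : Spoly n -> Prop := coef_ideal1 A.

Definition I_ideal n (A : form1 n) : Spoly n -> Prop :=
  fun h => exists eta : form1 n,
    forall i j, h * dform A i j = wedge11 A eta i j.

Definition K_ideal n (A : form1 n) : Spoly n -> Prop :=
  colon_ideal (J_ideal A) (coef_ideal2 (dform A)).

(* sing(omega) = V(J(omega)) in P^n has codimension >= 2: every prime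
   containing J(omega) has height >= 2. *)
Definition sing_codim_ge2 n (A : form1 n) : Prop :=
  forall q : Spoly n -> Prop, is_prime_ideal q -> ideal_sub (J_ideal A) q ->
    height_ge2 q.

(* omega in F^1(P^n, e) (representative of the projective class). *)
Definition in_F1 n (e : nat) (A : form1 n) : Prop :=
  (2 <= e)%N /\
  [/\ (forall i, A i \is (e.-1).-homog),
      (exists i, A i != 0),
      contrR A = 0,
      (forall i j k, wedge12 A (dform A) i j k = 0)
    & sing_codim_ge2 A].

Definition division_point n (A : form1 n) (p : Spoly n -> Prop) : Prop :=
  loc_ideal (I_ideal A) p 1.

(* p not in the subscheme K = Proj(S/K(omega)): K(omega) is not contained in p. *)
Definition notin_Kscheme n (A : form1 n) (p : Spoly n -> Prop) : Prop :=
  ~ ideal_sub (K_ideal A) p.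

Definition in_U n (e : nat) (A : form1 n) : Prop :=
  in_F1 e A /\
  forall p, is_Pn_point p -> notin_Kscheme A p -> division_point A p.

(* Main.v *)
Require Import Defs.
From HB Require Import structures.
From mathcomp Require Import all_boot all_order all_algebra.
From mathcomp Require Import complex mpoly fraction zify ring Rstruct.
From mathcomp Require classical_sets.
From Stdlib Require Import Classical.

Set Implicit Arguments.
Unset Strict Implicit.
Unset Printing Implicit Defensive.
Import GRing.Theory Num.Theory.
Local Open Scope ring_scope.


Section Gen.
Variable R : comNzRingType.
Implicit Types (I : R -> Prop).

Lemma idl0 I : is_ideal I -> I 0. Proof. by case. Qed.
Lemma idlD I a b : is_ideal I -> I a -> I b -> I (a + b).
Proof. by case=> _ H _; apply: H. Qed.
Lemma idlMl I r a : is_ideal I -> I a -> I (r * a).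
Proof. by case=> _ _ H; apply: H. Qed.
Lemma idlMr I r a : is_ideal I -> I a -> I (a * r).
Proof. by move=> hI ha; rewrite mulrC; apply: idlMl. Qed.
Lemma idlN I a : is_ideal I -> I a -> I (- a).
Proof. by move=> hI ha; rewrite -mulN1r; apply: idlMl. Qed.
Lemma idlB I a b : is_ideal I -> I a -> I b -> I (a - b).
Proof. by move=> hI ha hb; apply: idlD => //; apply: idlN. Qed.
Lemma idl_sum I (T : Type) (r : seq T) (P : pred T) (F : T -> R) :
  is_ideal I -> (forall i, P i -> I (F i)) -> I (\sum_(i <- r | P i) F i).
Proof.
move=> hI hF; elim/big_rec: _ => [|i x Pi Ix]; first exact: idl0.
by apply: idlD => //; apply: hF.
Qed.

Lemma gen_ideal_ideal (T : finType) (g : T -> R) : is_ideal (gen_ideal g).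
Proof.
split.
- by exists (fun _ => 0); rewrite big1 // => i _; rewrite mul0r.
- move=> a b [c ->] [c' ->]; exists (fun i => c i + c' i).
  by rewrite -big_split /=; apply: eq_bigr => i _; rewrite mulrDl.
- move=> r a [c ->]; exists (fun i => r * c i).
  by rewrite mulr_sumr; apply: eq_bigr => i _; rewrite mulrA.
Qed.

Lemma gen_ideal_gen (T : finType) (g : T -> R) i : gen_ideal g (g i).
Proof.
exists (fun j => if j == i then 1 else 0).
rewrite (bigD1 i) //= eqxx mul1r big1 ?addr0 // => j /negbTE ->.
by rewrite mul0r.
Qed.

Lemma gen_ideal_min (T : finType) (g : T -> R) I :
  is_ideal I -> (forall i, I (g i)) -> forall h, gen_ideal g h -> I h.
Proof.
move=> hI hg h [c ->]; apply: idl_sum => // i _; exact: idlMl.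
Qed.

End Gen.

Section Hom.
Variables (n : nat) (R : comNzRingType).
Implicit Types (p q : {mpoly R[n]}).
Local Notation ph := (pihomog mdeg).

Lemma ph_sum d (T : Type) (r : seq T) (Pr : pred T) (F : T -> {mpoly R[n]}) :
  ph d (\sum_(i <- r | Pr i) F i) = \sum_(i <- r | Pr i) ph d (F i).
Proof. exact: raddf_sum. Qed.

Lemma ph_homog_eq d e p : p \is d.-homog -> ph e p = if d == e then p else 0.
Proof.
move=> hp; case: eqP => [<-|/eqP ne]; first exact: pihomog_dE.
exact: pihomog_ne0 ne hp.
Qed.

Lemma phM_homog t q d p : q \is t.-homog ->
  ph d (p * q) = if (t <= d)%N then ph (d - t) p * q else 0.
Proof.
move=> hq; set k := (mmeasure mdeg p + d).+1.
rewrite {1}(@pihomog_partitionE _ _ mdeg k p); last by rewrite /k; lia.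
rewrite mulr_suml raddf_sum /=.
have E (i : 'I_k) : ph d (ph i p * q) = if (i + t == d)%N then ph i p * q else 0.
  by apply: ph_homog_eq; apply: dhomogM => //; apply: pihomogP.
rewrite (eq_bigr _ (fun i _ => E i)).
case: leqP => [le|lt].
  have lt_k : (d - t < k)%N by rewrite /k; lia.
  rewrite (bigD1 (Ordinal lt_k)) //= subnK // eqxx big1 ?addr0 // => i ne.
  case: eqP => // ei; case/eqP: ne; apply: val_inj => /=; lia.
by rewrite big1 // => i _; case: eqP => //; lia.
Qed.

Lemma phM_homogl t q d p : q \is t.-homog ->
  ph d (q * p) = if (t <= d)%N then q * ph (d - t) p else 0.
Proof. by move=> hq; rewrite mulrC (phM_homog d p hq); case: leqP; rewrite // mulrC. Qed.

End Hom.

Section Der.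
Variables (n : nat) (R : comNzRingType).
Implicit Types (p q : {mpoly R[n]}).
Local Notation ph := (pihomog mdeg).

Lemma mdeg_subU (m : 'X_{1..n}) (i : 'I_n) : m i != 0%N -> mdeg (m - U_(i))%MM = (mdeg m).-1.
Proof.
rewrite -lep1mP => le; rewrite -{2}(submK le) mdegD mdeg1; lia.
Qed.

Lemma mderiv_homog d p i : p \is d.+1.-homog -> p^`M(i) \is d.-homog.
Proof.
move=> /dhomogP hp; rewrite [p]mpolyE raddf_sum /= big_seq.
apply: rpred_sum => m /hp hm; rewrite linearZ /= mderivX; apply: rpredZ.
case: (eqVneq (m i) 0%N) => [e|ne].
  by rewrite e scale0r rpred0.
apply: rpredZ; rewrite dhomogX; have := mdeg_subU ne; rewrite hm => E; apply/eqP; exact: E.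
Qed.

Lemma XmderivX (m : 'X_{1..n}) (i : 'I_n) : 'X_i * ('X_[m])^`M(i) = (m i)%:R *: ('X_[m] : {mpoly R[n]}).
Proof.
rewrite mderivX -scalerAr; case: (eqVneq (m i) 0%N) => [->|ne].
  by rewrite !scale0r.
by rewrite -mpolyXD addmC submK // lep1mP.
Qed.

Lemma euler d p : p \is d.-homog -> \sum_i 'X_i * p^`M(i) = p *+ d.
Proof.
move=> /dhomogP hp; rewrite {1 2}[p]mpolyE.
have -> : \sum_i 'X_i * (\sum_(m <- msupp p) p@_m *: 'X_[m])^`M(i) =
  \sum_i \sum_(m <- msupp p) p@_m *: ('X_i * ('X_[m])^`M(i)).
  apply: eq_bigr => i _; rewrite raddf_sum mulr_sumr /=; apply: eq_bigr => m _.
  by rewrite linearZ /= scalerAr.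
rewrite exchange_big /= -sumrMnl big_seq [RHS]big_seq; apply: eq_bigr => m hm.
under eq_bigr do rewrite XmderivX scalerA.
rewrite -scaler_suml -mulr_sumr -natr_sum -mdegE (hp m hm) -scalerA scaler_nat.
by rewrite scalerMnr.
Qed.

End Der.

Section CCsec.
Variable n : nat.
Local Notation ph := (pihomog mdeg).
Lemma const_ideal (p : Spoly n) : ph 0 p = 0 -> irrelevant_ideal p.
Proof.
move=> h0; rewrite [p]mpolyE (bigID (fun m => mdeg m == 0%N)) /=.
rewrite -pihomogE h0 add0r; apply: idl_sum; first exact: gen_ideal_ideal.
move=> m nz; rewrite mdegE in nz.
have [i hi] : exists i, m i != 0%N.
  apply: NNPP => H; move/negP: nz; apply; rewrite big1 // => i _.
  by apply/eqP/negPn/negP => hi; apply: H; exists i.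
have E : ('X_[m] : Spoly n) = 'X_[m - U_(i)] * 'X_i.
  by rewrite -mpolyXD submK // lep1mP.
rewrite E scalerAl; apply: idlMl; first exact: gen_ideal_ideal.
exact: (gen_ideal_gen (fun i0 : 'I_n.+1 => 'X_i0)).
Qed.
End CCsec.

Lemma natCC k : ((k.+1)%:R : CC) != 0.
Proof.
apply/eqP => h; have := congr1 (@complex.Re _) h.
rewrite (raddfMn (@complex.Re _)) /= => /eqP.
by rewrite pnatr_eq0.
Qed.

Section Main.
Variables (n e : nat) (A : form1 n).
Hypothesis hA : forall i, A i \is e.+1.-homog.
Local Notation ph := (pihomog mdeg).

Lemma charCC k (p : Spoly n) : p *+ k.+1 = 0 -> p = 0.
Proof.
move=> h; rewrite -scaler_nat in h.
by rewrite -(scalerK (natCC k) p) h scaler0.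
Qed.

Lemma dform_homog i j : dform A i j \is e.-homog.
Proof. by apply: rpredB; apply: mderiv_homog. Qed.

Lemma J_ph (h : Spoly n) : J_ideal A h -> ph e h = 0.
Proof.
case=> c ->; rewrite raddf_sum big1 // => i _.
by have := phM_homog e (c i) (hA i); rewrite ltnn => H; exact: H.
Qed.

Lemma I_homog (h : Spoly n) d : I_ideal A h -> I_ideal A (ph d h).
Proof.
case=> eta H.
exists (fun j => if (1 <= d)%N then ph (d + e - e.+1) (eta j) else 0).
move=> i j; have := congr1 (ph (d + e)) (H i j).
rewrite /wedge11 raddfB /= !(phM_homogl _ _ (hA _)).
rewrite (phM_homog _ _ (dform_homog i j)) leq_addl addnK.
case: d => [|d] /=; first by rewrite add0n ltnn => ->; rewrite !mulr0 subr0.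
by rewrite addSn ltnS leq_addl.
Qed.

Lemma I_sub_K (h : Spoly n) : I_ideal A h -> K_ideal A h.
Proof.
case=> eta H g [c ->]; rewrite mulr_sumr; apply: idl_sum.
  exact: gen_ideal_ideal.
move=> ij _; rewrite mulrCA H /wedge11; apply: idlMl; first exact: gen_ideal_ideal.
apply: idlB; first exact: gen_ideal_ideal.
  by rewrite mulrC; apply: idlMl; [exact: gen_ideal_ideal| exact: gen_ideal_gen].
by rewrite mulrC; apply: idlMl; [exact: gen_ideal_ideal| exact: gen_ideal_gen].
Qed.

Lemma mderivXi (i j : 'I_n.+1) : ('X_i : Spoly n)^`M(j) = (i == j)%:R.
Proof.
rewrite mderivX mnm1E; case: eqP => [->|_]; last by rewrite scale0r.
have -> : (U_(j) - U_(j))%MM = 0%MM.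
  by apply/mnmP => k; rewrite mnmBE subnn mnm0E.
by rewrite mpolyX0 scale1r.
Qed.

Lemma dform_ne0 : (exists i, A i != 0) -> contrR A = 0 ->
  exists i j, dform A i j != 0.
Proof.
move=> [i0 nz] hc; apply: NNPP => H; apply/negP: nz; apply/negPn/eqP.
have D i j : dform A i j = 0.
  by apply/eqP/negPn/negP => hij; apply: H; exists i, j.
have := congr1 (mderiv i0) hc; rewrite /contrR raddf_sum /= raddf0.
under eq_bigr do rewrite mderivM mderivXi.
rewrite big_split /=.
rewrite (bigD1 i0) //= eqxx mul1r big1 ?addr0; last first.
  by move=> i /negbTE; rewrite eq_sym => ->; rewrite mul0r.
have -> : \sum_i 'X_i * (A i)^`M(i0) = \sum_i 'X_i * (A i0)^`M(i).
  apply: eq_bigr => i _; congr (_ * _); apply/eqP; rewrite -subr_eq0.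
  by have := D i0 i; rewrite /dform => ->.
by rewrite (euler (hA i0)) -mulrS => /charCC.
Qed.
End Main.

Section Main2.
Variables (n e : nat) (A : form1 n).
Hypothesis hA : forall i, A i \is e.+1.-homog.
Local Notation ph := (pihomog mdeg).

Lemma K_ph0 (h : Spoly n) : (exists i, A i != 0) -> contrR A = 0 ->
  K_ideal A h -> ph 0 h = 0.
Proof.
move=> nz hc hK; have [i [j ne]] := dform_ne0 hA nz hc.
have g : coef_ideal2 (dform A) (dform A i j).
  exact: (gen_ideal_gen (fun ij : 'I_n.+1 * 'I_n.+1 => dform A ij.1 ij.2) (i, j)).
have := J_ph hA (hK _ g); rewrite (phM_homog _ _ (dform_homog hA i j)) leqnn subnn.
by move/eqP; rewrite mulf_eq0 (negbTE ne) orbF => /eqP.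
Qed.
End Main2.

Section Zorn.
Variable R : comNzRingType.
Variables (I : R -> Prop) (f : R).
Hypothesis hI : is_ideal I.
Hypothesis hf : forall k, ~ I (f ^+ k).

Definition Good (X : R -> Prop) :=
  [/\ is_ideal X, (forall g, I g -> X g) & forall k, ~ X (f ^+ k)].

Definition Pc (X : R -> Prop) := (forall t, ~ X t) \/ Good X.

Definition ext (X : R -> Prop) a := fun y => exists q r, X q /\ y = q + r * a.

Lemma ext_ideal X a : is_ideal X -> is_ideal (ext X a).
Proof.
move=> hX; split.
- by exists 0, 0; split; [exact: idl0| rewrite mul0r addr0].
- move=> y z [q [r [Xq ->]]] [q' [r' [Xq' ->]]]; exists (q + q'), (r + r').
  by split; [exact: idlD| rewrite mulrDl addrACA].
- move=> s y [q [r [Xq ->]]]; exists (s * q), (s * r).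
  by split; [exact: idlMl| rewrite mulrDr mulrA].
Qed.

Lemma ext_sub X a y : X y -> ext X a y.
Proof. by move=> Xy; exists y, 0; rewrite mul0r addr0. Qed.

Lemma ext_a X a : is_ideal X -> ext X a a.
Proof. by move=> hX; exists 0, 1; rewrite add0r mul1r; split=> //; exact: idl0. Qed.

Lemma exists_prime : exists P, [/\ is_prime_ideal P, ideal_sub I P & ~ P f].
Proof.
have [|M [PM Mmax]] := @classical_sets.Zorn_bigcup R Pc.
  move=> F FP Ftot.
  case: (classic (exists X, F X /\ exists t, X t)) => [[X0 [FX0 [t0 X0t]]]|H]; last first.
    by left => t [X FX Xt]; apply: H; exists X; split=> //; exists t.
  have GX X : F X -> (exists t, X t) -> Good X.
    by move=> FX [t Xt]; case: (FP X FX) => // /(_ t).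
  have G0 := GX _ FX0 (ex_intro _ t0 X0t).
  right; split.
  - split.
    + by exists X0 => //; case: G0 => [[]].
    + move=> a b [Xa FXa Xaa] [Xb FXb Xbb].
      case: (Ftot _ _ FXa FXb) => sub.
        exists Xb => //; case: (GX _ FXb (ex_intro _ b Xbb)) => hXb _ _.
        by apply: idlD => //; apply: sub.
      exists Xa => //; case: (GX _ FXa (ex_intro _ a Xaa)) => hXa _ _.
      by apply: idlD => //; apply: sub.
    + move=> r a [Xa FXa Xaa]; exists Xa => //.
      by case: (GX _ FXa (ex_intro _ a Xaa)) => hXa _ _; apply: idlMl.
  - by move=> g Ig; exists X0 => //; case: G0 => _ IX0 _; apply: IX0.
  - move=> k [X FX Xk]; case: (GX _ FX (ex_intro _ _ Xk)) => _ _ /(_ k).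
    by apply.
have GM : Good M.
  case: PM => // emp; exfalso; apply: (Mmax I); last by right; split.
  split; first by move=> t /emp.
  by move=> sub; apply: (emp 0); apply: sub; exact: idl0.
case: GM => hM IM fM; exists M; split => //; last by move/(_ 1%N): fM; rewrite expr1.
split => //; first by move/(_ 0%N): fM; rewrite expr0.
move=> a b Mab; apply: NNPP => H.
have nA : ~ M a by move=> ?; apply: H; left.
have nB : ~ M b by move=> ?; apply: H; right.
have pw c : ~ M c -> exists k, ext M c (f ^+ k).
  move=> nc; apply: NNPP => H'; apply: (Mmax (ext M c)).
    split; first by move=> y; apply: ext_sub.
    by move=> sub; apply: nc; apply: sub; apply: ext_a.
  right; split; first exact: ext_ideal.
    by move=> g /IM; apply: ext_sub.
  by move=> k Xk; apply: H'; exists k.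
have [k [q1 [r1 [Mq1 E1]]]] := pw _ nA.
have [l [q2 [r2 [Mq2 E2]]]] := pw _ nB.
apply: (fM (k + l)%N); rewrite exprD E1 E2.
have -> : (q1 + r1 * a) * (q2 + r2 * b) =
  q1 * (q2 + r2 * b) + (r1 * a * q2 + r1 * r2 * (a * b)).
  by ring.
apply: idlD => //; first exact: idlMr.
by apply: idlD => //; [exact: idlMl | exact: idlMl].
Qed.
End Zorn.

Lemma min_ex (Q : nat -> Prop) : (exists d, Q d) ->
  exists d, Q d /\ forall d', (d' < d)%N -> ~ Q d'.
Proof.
move=> [d Qd]; elim: d {-2}d (leqnn d) Qd => [|N IH] d led Qd.
  by exists d; split=> // d'; lia.
case: (classic (exists d', (d' < d)%N /\ Q d')) => [[d' [lt Qd']]|H].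
  by apply: (IH d') => //; lia.
by exists d; split=> // d' lt Qd'; apply: H; exists d'.
Qed.

Section Star.
Variable n : nat.
Local Notation ph := (pihomog mdeg).
Variable P : Spoly n -> Prop.

Definition star : Spoly n -> Prop := fun g => forall d, P (ph d g).

Lemma star_sub g : is_ideal P -> star g -> P g.
Proof.
move=> hP sg; rewrite (@pihomog_partitionE _ _ mdeg (mmeasure mdeg g) g) //.
by apply: idl_sum => // i _; apply: sg.
Qed.

Lemma star_ideal : is_ideal P -> is_ideal star.
Proof.
move=> hP; split.
- by move=> d; rewrite pihomog0; exact: idl0.
- by move=> a b sa sb d; rewrite pihomogD; apply: idlD.
- move=> r a sa d; rewrite (@pihomog_partitionE _ _ mdeg (mmeasure mdeg a) a) //.
  rewrite mulr_sumr ph_sum; apply: idl_sum => // j _.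
  have := phM_homog d r (pihomogP mdeg j a); case: leqP => _ E.
    rewrite E; exact: idlMl.
  by rewrite E; exact: idl0.
Qed.

Lemma star_homog g d : is_ideal P -> star g -> star (ph d g).
Proof.
move=> hP sg d'; rewrite (ph_homog_eq d' (pihomogP mdeg d g)).
by case: eqP => _; [apply: sg | apply: idl0].
Qed.

Lemma star_prime : is_prime_ideal P -> is_prime_ideal star.
Proof.
case=> hP n1 pm; split; first exact: star_ideal.
  by move/(_ 0%N); rewrite pihomog_dE //; exact: dhomog1.
move=> a b sab; apply: NNPP => H.
have [i0 [ni0 mi0]] : exists d, ~ P (ph d a) /\ forall d', (d' < d)%N -> ~ ~ P (ph d' a).
  apply: min_ex; apply: NNPP => H'; apply: H; left => d.
  by apply: NNPP => nd; apply: H'; exists d.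
have [j0 [nj0 mj0]] : exists d, ~ P (ph d b) /\ forall d', (d' < d)%N -> ~ ~ P (ph d' b).
  apply: min_ex; apply: NNPP => H'; apply: H; right => d.
  by apply: NNPP => nd; apply: H'; exists d.
set N := (i0 + j0)%N; have := sab N.
set k := (mmeasure mdeg a + N).+1.
rewrite (@pihomog_partitionE _ _ mdeg k a); last by rewrite /k; lia.
rewrite mulr_suml ph_sum.
have lt0 : (i0 < k)%N by rewrite /k /N; lia.
rewrite (bigD1 (Ordinal lt0)) //= => Hs.
have Hr : P (\sum_(i < k | i != Ordinal lt0) ph N (ph i a * b)).
  apply: idl_sum => // i ne.
  have := phM_homogl N b (pihomogP mdeg i a); case: leqP => le E; last first.
    by rewrite E; exact: idl0.
  rewrite E; case: (ltngtP i i0) => c.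
  - by apply: idlMr => //; apply: NNPP; apply: mi0.
  - by apply: idlMl => //; apply: NNPP; apply: mj0; rewrite /N; lia.
  - by case/eqP: ne; apply: val_inj.
have := idlB hP Hs Hr; rewrite addrK.
have := phM_homogl N b (pihomogP mdeg i0 a); rewrite /N leq_addr addKn => E.
rewrite E; case/pm => //.
Qed.

End Star.

Theorem theorem4p12 (n e : nat) (A : form1 n) :
  in_F1 e A ->
  (in_U e A -> set_eq (ideal_radical (I_ideal A)) (ideal_radical (K_ideal A))) /\
  (set_eq (ideal_radical (I_ideal A)) (ideal_radical (K_ideal A)) -> in_U e A).
Proof.
move=> hF; have [he [hA nz hc _ _]] := hF.
have [e' ee'] : exists e', e = e'.+2 by exists e.-2; lia.
have hA' : forall i, A i \is e'.+1.-homog by move=> i; have := hA i; rewrite ee'.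
have JI : is_ideal (I_ideal A).
  split.
  - by exists (fun _ => 0) => i j; rewrite mul0r /wedge11 !mulr0 subrr.
  - move=> a b [ea Ha] [eb Hb]; exists (fun j => ea j + eb j) => i j.
    by rewrite mulrDl Ha Hb /wedge11; ring.
  - move=> r a [ea Ha]; exists (fun j => r * ea j) => i j.
    by rewrite -mulrA Ha /wedge11; ring.
have KI : is_ideal (K_ideal A).
  split.
  - by move=> g _; rewrite mul0r; exact: idl0 (gen_ideal_ideal _).
  - by move=> a b Ka Kb g hg; rewrite mulrDl; apply: idlD (gen_ideal_ideal _) _ _;
      [apply: Ka | apply: Kb].
  - by move=> r a Ka g hg; rewrite -mulrA; apply: idlMl (gen_ideal_ideal _) _; apply: Ka.
split; last first.
  move=> Heq; split=> // p [pp ph np] nK.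
  have [k [Kk nk]] : exists k, K_ideal A k /\ ~ p k.
    by apply: NNPP => H; apply: nK => h Kh; apply: NNPP => nh; apply: H; exists h.
  have [m Im] : exists m, I_ideal A (k ^+ m) by apply/Heq; exists 1%N; rewrite expr1.
  case: pp => hp n1 pm.
  have nkm : ~ p (k ^+ m).
    elim: m {Im} => [|m IH]; first by rewrite expr0.
    by rewrite exprS => /pm [].
  have nz0 : k ^+ m != 0 by apply/eqP => E; apply: nkm; rewrite E; exact: idl0.
  exists (k ^+ m), (k ^+ m); split => //.
  by rewrite divff // tofrac_eq0.
case=> _ hU h; split.
  by case=> m Im; exists m; apply: I_sub_K.
case=> m Km; apply: NNPP => nI.
set f := h ^+ m.
have hf : forall k, ~ I_ideal A (f ^+ k).
  by move=> k Ik; apply: nI; exists (m * k)%N; rewrite exprM.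
have [P [Pp IP nPf]] := exists_prime JI hf.
have hP : is_ideal P by case: Pp.
have IPs : forall g, I_ideal A g -> star P g.
  by move=> g Ig d; apply: IP; apply: I_homog hA' _ _ Ig.
have nPsf : ~ star P f by move/(star_sub hP).
have pt : is_Pn_point (star P).
  split; first exact: star_prime.
    by move=> g d sg; apply: star_homog.
  move=> E; apply: nPsf; apply/E.
  by apply: const_ideal; have := K_ph0 hA' nz hc Km.
have := hU _ pt.
case.
  by move=> sub; apply: nPsf; apply: sub.
move=> a [s [Ia ns E]].
have s0 : s != 0 by apply/eqP => E0; apply: ns; rewrite E0; exact: idl0 (star_ideal hP).
have : FracField.tofrac a = FracField.tofrac s.
  have ts0 : FracField.tofrac s != 0 by rewrite tofrac_eq0.
  by rewrite -{1}(divfK ts0 (FracField.tofrac a)) -E mul1r.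
move/eqP; rewrite tofrac_eq => /eqP Eas.
by apply: ns; rewrite -Eas; apply: IPs.
Qed.
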